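(* Let $\Pi$ be any one of the six sets \[\{[\overline{123}],[\overline{132}]\},\ \{[\overline{123}],[\overline{213}]\},\ \{[\overline{321}],[\overline{231}]\},\ \{[\overline{321}],[\overline{312}]\},\ \{[\overline{132}],[\overline{231}]\},\ \{[\overline{213}],[\overline{312}]\}.\] Then $\left|\mathrm{Av}_n[\Pi]\right|=1$ for $n\le 2$ and $\left|\mathrm{Av}_n[\Pi]\right|=0$ for $n\ge 3$.
   Context: For $\sigma\in S_n$, the cyclic permutation $[\sigma]$ is the set of all rotations of $\sigma$; $[S_n]$ is the set of cyclic permutations of length $n$. A vincular pattern is a permutation $\pi\in S_k$ with some pairs of adjacent positions joined by an overline (vinculum); a linear permutation $\tau$ contains it if $\tau$ has a subsequence order-isomorphic to $\pi$ whose entries corresponding to positions joined by a vinculum are adjacent in $\tau$. A cyclic permutation $[\sigma]$ contains $[\pi]$ if some rotation of $\sigma$ contains $\pi$. A fully overlined pattern such as $[\overline{123}]$ thus requires three cyclically consecutive entries in the given relative order. $\mathrm{Av}_n[\Pi]$ is the set of $[\sigma]\in[S_n]$ avoiding every pattern in $\Pi$. *)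

(* Defs.v *)
From mathcomp Require Import all_boot all_order all_fingroup.
Set Implicit Arguments. Unset Strict Implicit. Unset Printing Implicit Defensive.



Definition cshift (n : nat) : 'S_n := perm (@ordS_inj n).

Definition oneline (n : nat) (s : 'S_n) : seq nat := [seq val (s i) | i <- enum 'I_n].

(* The cyclic permutation [s]: the set of all rotations of s.
   (cshift n ^+ k * s) i = s (i + k mod n), i.e. rotation of s left by k. *)
Definition cyc_class (n : nat) (s : 'S_n) : {set 'S_n} :=
  [set (cshift n ^+ k * s)%g | k : 'I_n.+1].

(* A linear sequence t contains the fully overlined (consecutive) pattern p
   (p given in one-line notation) if some factor of size p consecutive entries
   of t is order-isomorphic to p. *)
Definition contains_consec (t p : seq nat) : bool :=
  [exists i : 'I_(size t).+1, (i + size p <= size t) &&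
    [forall a : 'I_(size p), forall b : 'I_(size p),
      (nth 0 t (i + a) < nth 0 t (i + b)) == (nth 0 p a < nth 0 p b)]].

Definition cyc_contains (n : nat) (s : 'S_n) (p : seq nat) : bool :=
  [exists r in cyc_class s, contains_consec (oneline r) p].

Definition Av (n : nat) (Pi : seq (seq nat)) : {set {set 'S_n}} :=
  [set cyc_class s | s in [set s : 'S_n | all (fun p => ~~ cyc_contains s p) Pi]].

Definition six_sets : seq (seq (seq nat)) :=
  [:: [:: [:: 1; 2; 3]; [:: 1; 3; 2]];
      [:: [:: 1; 2; 3]; [:: 2; 1; 3]];
      [:: [:: 3; 2; 1]; [:: 2; 3; 1]];
      [:: [:: 3; 2; 1]; [:: 3; 1; 2]];
      [:: [:: 1; 3; 2]; [:: 2; 3; 1]];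
      [:: [:: 2; 1; 3]; [:: 3; 1; 2]]].

(* Main.v *)
Require Import Defs.
From mathcomp Require Import all_boot all_order all_fingroup.
From mathcomp Require Import zify.
Set Implicit Arguments. Unset Strict Implicit.

Lemma cshiftX n k (i : 'I_n) : val ((cshift n ^+ k)%g i) = (i + k) %% n.
Proof.
elim: k => [|k IH]; first by rewrite expg0 perm1 addn0 modn_small.
rewrite expgSr permM /cshift permE /= -/(cshift n) IH.
idtac.
rewrite -addn1 modnDml; by rewrite addn1 addnS.
Qed.

Lemma rot_exists n (s : 'S_n) (x c : 'I_n) :
  exists2 r, r \in cyc_class s & r c = x.
Proof.
set j := (s^-1)%g x.
exists ((cshift n ^+ (inord ((j + (n - c)) %% n) : 'I_n.+1)) * s)%g; last first.
  rewrite permM.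
  have -> : (cshift n ^+ (inord ((j + (n - c)) %% n) : 'I_n.+1))%g c = j.
    apply: val_inj; rewrite cshiftX inordK; last first.
      apply: ltn_trans (ltnSn n); apply: ltn_pmod; exact: (leq_ltn_trans (leq0n _) (ltn_ord c)).
    have hc := ltn_ord c; have hj := ltn_ord j.
    rewrite modnDmr.
    have -> : c + (j + (n - c)) = j + n by lia.
    by rewrite modnDr modn_small.
  by rewrite permKV.
by apply/imsetP; exists (inord ((j + (n - c)) %% n)).
Qed.

Lemma size_oneline n (r : 'S_n) : size (oneline r) = n.
Proof. by rewrite /oneline size_map size_enum_ord. Qed.

Lemma nth_oneline n (r : 'S_n) a (Ha : a < n) :
  nth 0 (oneline r) a = val (r (Ordinal Ha)).
Proof.
rewrite /oneline (nth_map (Ordinal Ha)) ?size_enum_ord //.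
by rewrite -[X in nth _ _ X]/(val (Ordinal Ha)) nth_ord_enum.
Qed.

Lemma pat3 (t p : seq nat) : 3 <= size t -> size p = 3 ->
  (forall a b, a < 3 -> b < 3 -> (nth 0 t a < nth 0 t b) == (nth 0 p a < nth 0 p b)) ->
  contains_consec t p.
Proof.
move=> ht hp H; apply/existsP; exists ord0; rewrite /= hp add0n ht /=.
by apply/forallP => a; apply/forallP => b; rewrite !add0n; apply: H; apply: ltn_ord.
Qed.

Lemma data m (s : 'S_(m.+3)) (x : 'I_(m.+3)) (c : nat) : c < 3 ->
  exists2 r, r \in cyc_class s &
   let t := oneline r in
   [/\ nth 0 t c = x, nth 0 t 0 != nth 0 t 1, nth 0 t 0 != nth 0 t 2,
       nth 0 t 1 != nth 0 t 2 &
       [/\ nth 0 t 0 < m.+3, nth 0 t 1 < m.+3 & nth 0 t 2 < m.+3]].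
Proof.
move=> hc.
have hc' : c < m.+3 by apply: leq_trans hc _.
have [r hr rc] := rot_exists s x (Ordinal hc').
exists r => //=.
have h0 : 0 < m.+3 by []. have h1 : 1 < m.+3 by []. have h2 : 2 < m.+3 by [].
rewrite (nth_oneline r hc') rc (nth_oneline r h0) (nth_oneline r h1) (nth_oneline r h2) !ltn_ord.
split => //; apply/negP => /eqP/val_inj/perm_inj/(congr1 val) //.
Qed.

Lemma pick2 m (s : 'S_(m.+3)) p q (x : 'I_(m.+3)) c : c < 3 ->
  (forall r : 'S_(m.+3), let t := oneline r in
     nth 0 t c = x -> nth 0 t 0 != nth 0 t 1 -> nth 0 t 0 != nth 0 t 2 ->
     nth 0 t 1 != nth 0 t 2 ->
     nth 0 t 0 < m.+3 -> nth 0 t 1 < m.+3 -> nth 0 t 2 < m.+3 ->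
     contains_consec t p || contains_consec t q) ->
  has (cyc_contains s) [:: p; q].
Proof.
move=> hc H; have [r hr /= [e h01 h02 h12 [b0 b1 b2]]] := data s x hc.
have := H r e h01 h02 h12 b0 b1 b2 => /orP [hp|hq].
  by apply/orP; left; apply/existsP; exists r; rewrite hr.
by apply/orP; right; apply/orP; left; apply/existsP; exists r; rewrite hr.
Qed.

Ltac fin := apply: pat3 => //; [by rewrite size_oneline |];
  move=> [|[|[|a]]] [|[|[|b]]] //= _ _; apply/eqP; lia.

Lemma core m (s : 'S_(m.+3)) Pi : Pi \in six_sets -> has (cyc_contains s) Pi.
Proof.
rewrite /six_sets !inE.
move=> /orP [/eqP->|/orP [/eqP->|/orP [/eqP->|/orP [/eqP->|/orP [/eqP->|/eqP->]]]]].
- apply: (@pick2 _ _ _ _ ord0 0) => // r /= e h01 h02 h12 b0 b1 b2.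
  case: (ltnP (nth 0 (oneline r) 1) (nth 0 (oneline r) 2)) => h;
    [apply/orP; left | apply/orP; right]; fin.
- apply: (@pick2 _ _ _ _ ord_max 2) => // r /= e h01 h02 h12 b0 b1 b2.
  case: (ltnP (nth 0 (oneline r) 0) (nth 0 (oneline r) 1)) => h;
    [apply/orP; left | apply/orP; right]; fin.
- apply: (@pick2 _ _ _ _ ord0 2) => // r /= e h01 h02 h12 b0 b1 b2.
  case: (ltnP (nth 0 (oneline r) 1) (nth 0 (oneline r) 0)) => h;
    [apply/orP; left | apply/orP; right]; fin.
- apply: (@pick2 _ _ _ _ ord_max 0) => // r /= e h01 h02 h12 b0 b1 b2.
  case: (ltnP (nth 0 (oneline r) 2) (nth 0 (oneline r) 1)) => h;
    [apply/orP; left | apply/orP; right]; fin.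
- apply: (@pick2 _ _ _ _ ord_max 1) => // r /= e h01 h02 h12 b0 b1 b2.
  case: (ltnP (nth 0 (oneline r) 0) (nth 0 (oneline r) 2)) => h;
    [apply/orP; left | apply/orP; right]; fin.
- apply: (@pick2 _ _ _ _ ord0 1) => // r /= e h01 h02 h12 b0 b1 b2.
  case: (ltnP (nth 0 (oneline r) 0) (nth 0 (oneline r) 2)) => h;
    [apply/orP; left | apply/orP; right]; fin.
Qed.

Lemma sizes3 Pi : Pi \in six_sets -> all (fun p : seq nat => size p == 3) Pi.
Proof.
rewrite /six_sets !inE.
by move=> /orP [/eqP->|/orP [/eqP->|/orP [/eqP->|/orP [/eqP->|/orP [/eqP->|/eqP->]]]]].
Qed.

Lemma perm_small n (s t : 'S_n) : n <= 1 -> s = t.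
Proof.
move=> hn; apply/permP => i.
apply: ord_inj; have := ltn_ord (s i); have := ltn_ord (t i); lia.
Qed.

Lemma class2 (s : 'S_2) : cyc_class s = [set: 'S_2].
Proof.
apply/eqP; rewrite eqEcard subsetT cardsT card_Sn /=.
have h1 : s \in cyc_class s.
  by apply/imsetP; exists ord0; rewrite // expg0 mul1g.
have h2 : (cshift 2 * s)%g \in cyc_class s.
  by apply/imsetP; exists (inord 1); rewrite // inordK // expg1.
have hne : s != (cshift 2 * s)%g.
  apply/eqP => /(congr1 (fun r : 'S_2 => val (r ord0))).
  rewrite permM.
  have -> : (cshift 2 ord0) = (inord 1 : 'I_2) by apply: val_inj; rewrite /cshift permE /= inordK.
  have : s (inord 1) != s ord0 by rewrite (inj_eq perm_inj); apply/eqP => /(congr1 val); rewrite /= inordK.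
  by move=> /eqP h /val_inj /esym.
have hc2 : #|[set s; (cshift 2 * s)%g]| = 2 by rewrite cards2 hne.
apply: (@leq_trans #|[set s; (cshift 2 * s)%g]|); first by rewrite hc2.
apply: subset_leq_card; apply/subsetP => r; rewrite !inE => /orP [] /eqP -> //.
Qed.

Theorem proposition4p1 (Pi : seq (seq nat)) (hPi : Pi \in six_sets) (n : nat) :
  #|Av n Pi| = (if n <= 2 then 1 else 0).
Proof.
case: (leqP n 2) => hn.
  have hall : [set s : 'S_n | all (fun p => ~~ cyc_contains s p) Pi] = setT.
    apply/setP => s; rewrite !inE; apply/allP => p hp.
    have /eqP hs := allP (sizes3 hPi) p hp.
    apply/existsP => [[r /andP [_ /existsP [i /andP [hi _]]]]].
    move: hi; rewrite hs; have := size_oneline r; lia.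
  have hcl (s : 'S_n) : cyc_class s = cyc_class 1.
    move: s hall; case: n hn => [|[|[|k]]] // _ s _.
    - by rewrite (perm_small s 1).
    - by rewrite (perm_small s 1).
    - by rewrite !class2.
  have -> : Av n Pi = [set cyc_class 1].
    apply/setP => C; rewrite inE /Av hall; apply/imsetP/eqP.
      by move=> [s _ ->]; rewrite hcl.
    by move=> ->; exists 1%g.
  by rewrite cards1.
case: n hn => [|[|[|m]]] // _; rewrite /Av.
have -> : [set s : 'S_(m.+3) | all (fun p => ~~ cyc_contains s p) Pi] = set0.
  apply/setP => s; rewrite !inE; apply/negP => /allP H.
  have /hasP [p hp hc] := core s hPi.
  by have := H p hp; rewrite hc.
by rewrite imset0 cards0.
Qed.
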